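(* Let $d,a\in\mathbb{N}$ with $d,a\ge 1$, and let $G=(V,E)$ be a $d$-degenerate graph of maximum degree $\Delta=2da$ whose edges have distinct arrival times. Fix an ordering $v_1,\dots,v_n$ of $V$ in which each $v_i$ has at most $d$ neighbors among $v_1,\dots,v_{i-1}$. Run the following process: start with $E_1=\dots=E_a=\emptyset$; for $i=1,\dots,n$, process the front-edges at $v_i$ in increasing order of arrival time; when processing such an edge $e$, let $J(e)=\{j\in\{1,\dots,a\}: |E_j\cap \mathrm{Prev}(e,v_i)|\le 2d-1\}$, let $j'$ be the least index with $|E_{j'}\cap E(v_i)|\le 2d-1$, and add $e$ to $E_{j'}$. Then at every step: (i) such an index $j'$ exists, and adding $e$ to $E_{j'}$ keeps the maximum degree of $(V,E_{j'})$ at most $2d$ (so at the end $E_1,\dots,E_a$ partition $E$ with each $(V,E_j)$ of maximum degree at most $2d$); and (ii) $j'\in J(e)$ and $j'$ is among the $d+1$ smallest elements of $J(e)$, i.e. $|\{j\in J(e): j<j'\}|\le d$.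
   Context: All graphs are simple. For the ordering $v_1,\dots,v_n$, an edge $(v_i,v_k)$ with $i<k$ is a front-edge at $v_i$ and a back-edge at $v_k$. $E(v)$ denotes the set of edges incident to $v$, and $\mathrm{Prev}(e,v)$ denotes the set of edges in $E(v)$ that arrive (strictly) before $e$. A graph is $d$-degenerate if its vertices can be ordered so that each vertex has at most $d$ neighbors earlier in the order. *)

(* Defs.v *)
From mathcomp Require Import all_boot.
Set Implicit Arguments. Unset Strict Implicit. Unset Printing Implicit Defensive.

(* A simple graph is a symmetric irreflexive relation [e] on a finite type [T]. The vertex ordering v_1..v_n
   is given by an injective position map [pos : T -> nat] (v_i before v_k iff
   pos v_i < pos v_k). Arrival times are [arr : {set T} -> nat], injective on
   edges. Edge classes E_1..E_a are indexed by 'I_a (E_j is state j, with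
   index j : 'I_a standing for j+1). *)

Section Process.
Variables (T : finType) (e : rel T) (pos : T -> nat) (arr : {set T} -> nat)
          (d a : nat).

Definition isedge (f : {set T}) : bool :=
  [exists u, exists w, e u w && (f == [set u; w])].

Definition Eset : {set {set T}} := [set f | isedge f].

Definition Einc (v : T) : {set {set T}} := [set f | isedge f & v \in f].

Definition Prev (f : {set T}) (v : T) : {set {set T}} :=
  [set g in Einc v | arr g < arr f].

Definition frontedge (v : T) (f : {set T}) : bool :=
  [exists w, e v w && (pos v < pos w) && (f == [set v; w])].

Definition vorder : seq T := sort (fun x y => pos x <= pos y) (enum T).

Definition front (v : T) : seq {set T} :=
  sort (fun f g => arr f <= arr g) (enum [set f | frontedge v f]).

Definition proc : seq (T * {set T}) :=
  flatten [seq [seq (v, f) | f <- front v] | v <- vorder].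

Definition state := {ffun 'I_a -> {set {set T}}}.

Definition S0 : state := [ffun => set0].

Definition admissible (S : state) (v : T) (j : 'I_a) : bool :=
  #|S j :&: Einc v| <= 2 * d - 1.

Definition least_idx (S : state) (v : T) : option 'I_a :=
  [pick j | admissible S v j & [forall k : 'I_a, admissible S v k ==> (j <= k)]].

Definition Jset (S : state) (f : {set T}) (v : T) : {set 'I_a} :=
  [set j : 'I_a | #|S j :&: Prev f v| <= 2 * d - 1].

Definition step (S : state) (p : T * {set T}) : state :=
  match least_idx S p.1 with
  | Some j => [ffun k => if k == j then p.2 |: S k else S k]
  | None => S
  end.

Definition run (s : seq (T * {set T})) : state := foldl step S0 s.

Definition maxdeg_le (F : {set {set T}}) (m : nat) : bool :=
  [forall v : T, #|[set f in F | v \in f]| <= m].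

End Process.

(* Main.v *)
Require Import Defs.
From mathcomp Require Import all_boot.
From mathcomp Require Import zify.
Set Implicit Arguments. Unset Strict Implicit. Unset Printing Implicit Defensive.

Lemma sum_disj (I U : finType) (P : pred I) (A : I -> {set U}) (B : {set U}) :
  (forall i j g, i != j -> g \in A i -> g \in A j -> False) ->
  (forall i, P i -> A i \subset B) ->
  \sum_(i | P i) #|A i| <= #|B|.
Proof.
move=> Hd Hs.
have E : forall i, P i -> #|A i| = \sum_(g in B) (if g \in A i then 1 else 0).
  move=> i Pi. rewrite -big_mkcondr /= -sum1_card. apply: eq_bigl => g.
  apply/idP/andP => [Hg|[]//]. split=> //. exact: (subsetP (Hs i Pi)).
rewrite (eq_bigr _ E) exchange_big /= -sum1_card.
apply: leq_sum => g gB.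
case: (pickP (fun i => P i && (g \in A i))) => [i0 /andP[Pi0 gi0]|H].
- rewrite (bigD1 i0) //= gi0 big1 // => i /andP[Pi ne].
  case: ifP => // gi. exfalso. apply: (Hd i0 i g) => //. by rewrite eq_sym.
- rewrite big1 // => i Pi. by move: (H i); rewrite Pi /= => ->.
Qed.

Lemma disj_intro (U : finType) (A B : {set U}) :
  (forall g, g \in A -> g \in B -> False) -> [disjoint A & B].
Proof.
move=> H; rewrite -setI_eq0; apply/eqP/setP => g; rewrite in_set0.
apply/negP => /setIP[]; exact: H.
Qed.

Lemma pair_and (X : eqType) (r1 r2 : rel X) (s : seq X) :
  pairwise r1 s -> pairwise r2 s -> pairwise (fun x y => r1 x y && r2 x y) s.
Proof.
elim: s => //= x s IH /andP[a1 p1] /andP[a2 p2]. rewrite IH // andbT.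
apply/allP => y ys. by rewrite (allP a1 y ys) (allP a2 y ys).
Qed.

Lemma pair_sort (X : eqType) (k : X -> nat) (s : seq X) : uniq s ->
  pairwise (fun x y => (k x <= k y) && (x != y)) (sort (fun x y => k x <= k y) s).
Proof.
move=> us. apply: pair_and.
  rewrite -sorted_pairwise; last by move=> y x z; exact: leq_trans.
  apply: sort_sorted => x y; exact: leq_total.
have : uniq (sort (fun x y => k x <= k y) s) by rewrite sort_uniq.
rewrite uniq_pairwise; exact: id.
Qed.

Section Main.
Variables (T : finType) (e : rel T) (pos : T -> nat) (arr : {set T} -> nat) (d a : nat).
Hypotheses (d1 : 1 <= d) (a1 : 1 <= a) (esym : symmetric e) (eirr : irreflexive e)
  (Hmax : \max_(v : T) #|[set u | e v u]| = 2 * d * a)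
  (posI : injective pos)
  (Hback : forall v : T, #|[set u | e u v & pos u < pos v]| <= d)
  (arrI : {in Eset e &, injective arr}).

Local Notation proc := (proc e pos arr).
Local Notation stT := (state T a).

Definition R (p q : T * {set T}) : bool :=
  ((p.1 != q.1) && (pos p.1 <= pos q.1)) || [&& p.1 == q.1, arr p.2 <= arr q.2 & p.2 != q.2].

Lemma R_le u g v f : R (u, g) (v, f) -> pos u <= pos v.
Proof. by rewrite /R /= => /orP[/andP[_ ->]|/and3P[/eqP-> _ _]]. Qed.

Lemma front_cases u v g : frontedge e pos u g -> v \in g ->
  v = u \/ [/\ v != u, e u v, pos u < pos v & g = [set u; v]].
Proof.
case/existsP => w /andP[/andP[euw lt] /eqP ->]. rewrite !inE => /orP[/eqP->|/eqP->]; first by left.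
right; split=> //. apply/eqP => Ewu. by rewrite Ewu ltnn in lt.
Qed.

Lemma front_in u g : frontedge e pos u g -> u \in g.
Proof. by case/existsP => w /andP[_ /eqP ->]; rewrite !inE eqxx. Qed.

Lemma front_edge u g : frontedge e pos u g -> isedge e g.
Proof.
case/existsP => w /andP[/andP[euw _] Hg]. apply/existsP; exists u; apply/existsP; exists w.
by rewrite euw.
Qed.

Lemma mem_proc x : x \in proc -> frontedge e pos x.1 x.2.
Proof.
rewrite /Defs.proc => /flatten_mapP[v _] /mapP[f]. rewrite /front mem_sort mem_enum inE => Hf ->.
done.
Qed.

Lemma pair_gen (s : seq T) : pairwise (fun x y => (pos x <= pos y) && (x != y)) s ->
  pairwise R (flatten [seq [seq (v, f) | f <- front e pos arr v] | v <- s]).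
Proof.
elim: s => [|v s IH] //=. move=> /andP[Hall Hs].
rewrite pairwise_cat; apply/and3P; split; last exact: IH.
- apply/allrelP => x y /mapP[f _ ->] /flatten_mapP[u us /mapP[g _ ->]].
  move/allP: Hall => /(_ u us) /andP[le ne]. by rewrite /R /= ne le.
- rewrite pairwise_map. apply: sub_pairwise (pair_sort arr _) => [f g /andP[le ne]|].
    by rewrite /relpre /R /= eqxx le ne orbT.
  by rewrite enum_uniq.
Qed.

Lemma pair_proc : pairwise R proc.
Proof. apply: pair_gen. apply: pair_sort. exact: enum_uniq. Qed.

Definition Pset (s : seq (T * {set T})) : {set {set T}} := [set g | g \in [seq x.2 | x <- s]].

Lemma Pset_rcons s x : Pset (rcons s x) = x.2 |: Pset s.
Proof. by apply/setP => g; rewrite !inE map_rcons mem_rcons in_cons. Qed.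

Lemma PsetP s g : g \in Pset s -> exists u, (u, g) \in s.
Proof. by rewrite inE => /mapP[[u h] Hs /= ->]; exists u. Qed.

Definition Inv (S : stT) (s : seq (T * {set T})) : Prop :=
  [/\ forall j, S j \subset Pset s, forall g, g \in Pset s -> exists j, g \in S j,
      forall i j, i != j -> [disjoint S i & S j] & forall j, maxdeg_le (S j) (2 * d)].

Lemma prefix_facts s1 s2 v f : proc = s1 ++ (v, f) :: s2 ->
  [/\ frontedge e pos v f, (forall x, x \in s1 -> R x (v, f) /\ frontedge e pos x.1 x.2)
    & f \notin Pset s1].
Proof.
move=> Hp.
have Hin : forall x, x \in s1 ++ (v,f)::s2 -> frontedge e pos x.1 x.2.
  by move=> x; rewrite -Hp; exact: mem_proc.
have Fv : frontedge e pos v f by apply: (Hin (v,f)); rewrite mem_cat mem_head orbT.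
have HR : forall x, x \in s1 -> R x (v,f).
  move: pair_proc; rewrite Hp pairwise_cat => /and3P[/allrelP H _ _] x xs.
  apply: H => //; exact: mem_head.
have Hx : forall x, x \in s1 -> R x (v,f) /\ frontedge e pos x.1 x.2.
  move=> x xs; split; [exact: HR|apply: Hin; by rewrite mem_cat xs].
split=> //. apply/negP => /PsetP[u us].
have [Ruf Fu] := Hx _ us. simpl in Fu. rewrite /R /= eqxx /= !andbF orbF in Ruf. case/andP: Ruf => neq le.
have lt : pos u < pos v.
  rewrite ltn_neqAle le andbT. apply: contra neq => /eqP /posI -> //.
case: (front_cases Fv (front_in Fu)) => [Euv|[_ _ ltvu _]].
  by rewrite Euv eqxx in neq.
by move: (ltn_trans lt ltvu); rewrite ltnn.
Qed.

Lemma least_spec (S : stT) v j : least_idx e d S v = Some j ->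
  admissible e d S v j /\ forall k, admissible e d S v k -> j <= k.
Proof.
rewrite /least_idx; case: pickP => [x /andP[Hx /forallP Hk]|_] // [<-].
split=> // k Ak. exact: (implyP (Hk k) Ak).
Qed.

Lemma least_some (S : stT) v : (exists j, admissible e d S v j) ->
  exists j, least_idx e d S v = Some j.
Proof.
case=> j0 A0. rewrite /least_idx; case: pickP => [x _|H]; first by exists x.
case: (arg_minnP (fun j : 'I_a => j : nat) A0) => i Ai Hmin.
move: (H i); rewrite Ai /=. move/negbT/forallPn => [k]. rewrite negb_imply => /andP[Ak].
by rewrite (Hmin k Ak).
Qed.

Lemma key (S : stT) s1 s2 v f : proc = s1 ++ (v, f) :: s2 -> Inv S s1 ->
  (exists j, admissible e d S v j) /\
  (forall j', least_idx e d S v = Some j' ->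
     maxdeg_le (step e d S (v, f) j') (2 * d) /\
     j' \in Jset e arr d S f v /\
     #|[set j in Jset e arr d S f v | j < j']| <= d) /\
  Inv (step e d S (v, f)) (rcons s1 (v, f)).
Proof.
move=> Hp [Hsub Hcov Hdis Hdeg].
have [Fv Hs1 fP] := prefix_facts Hp.
have PE : forall g, g \in Pset s1 -> isedge e g.
  move=> g /PsetP[u us]. exact: front_edge (Hs1 _ us).2.
have fE : f \in Einc e v by rewrite inE (front_edge Fv) (front_in Fv).
have Hex : exists j, admissible e d S v j.
  case: (pickP (admissible e d S v)) => [j Aj|H]; first by exists j.
  exfalso.
  have L1 : \sum_(j < a) #|S j :&: Einc e v| <= #|Pset s1 :&: Einc e v|.
    apply: sum_disj.
      move=> i j g ij /setIP[gi _] /setIP[gj _].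
      by rewrite (disjointFr (Hdis i j ij) gi) in gj.
    move=> i _. apply: setSI. exact: Hsub.
  have L2 : #|Pset s1 :&: Einc e v| < #|Einc e v|.
    rewrite (cardsD1 f (Einc e v)) fE add1n ltnS. apply: subset_leq_card.
    apply/subsetP => g /setIP[gP gE]. rewrite in_setD1 gE andbT.
    apply/eqP => gf. by move: fP; rewrite -gf gP.
  have L3 : #|Einc e v| <= 2 * d * a.
    rewrite -Hmax. apply: (@leq_trans #|[set u | e v u]|); last exact: leq_bigmax.
    apply: (leq_trans _ (leq_imset_card (fun u => [set v; u]) [set u | e v u])).
    apply: subset_leq_card; apply/subsetP => g.
    rewrite /Einc inE => /andP[/existsP[x /existsP[y /andP[exy /eqP gd]]]].
    rewrite gd !inE => /orP[/eqP Evx|/eqP Evy]; subst.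
    - apply/imsetP; exists y => //. by rewrite inE.
    - apply/imsetP; exists x; first by rewrite inE esym. by rewrite setUC.
  have L4 : a * (2 * d) <= \sum_(j < a) #|S j :&: Einc e v|.
    rewrite mulnC -iter_addn_0 -big_const_ord. apply: leq_sum => j _.
    move: (H j); rewrite /admissible => /negbT. rewrite -ltnNge. lia.
  lia.
split; first exact: Hex.
have [j' Hl] := least_some Hex.
have [Aj' Hminj'] := least_spec Hl.
have Hstep : forall k, step e d S (v, f) k = if k == j' then f |: S k else S k.
  by move=> k; rewrite /step /= Hl ffunE.
have Deg : maxdeg_le (f |: S j') (2 * d).
  apply/forallP => x.
  case: (eqVneq x v) => [->|xv].
  - apply: (@leq_trans #|f |: (S j' :&: Einc e v)|).
      apply: subset_leq_card; apply/subsetP => g. rewrite inE => /andP[].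
      rewrite !in_setU1 => /orP[->//|gS] vg.
      by rewrite in_setI gS /Einc inE vg PE ?orbT // (subsetP (Hsub j') _ gS).
    rewrite cardsU1. apply: leq_trans (leq_add (leq_b1 _) Aj') _. lia.
  - case xf: (x \in f).
    + case: (front_cases Fv xf) => [xv'|[_ evx lt fdef]]; first by rewrite xv' eqxx in xv.
      apply: (@leq_trans d); last lia.
      apply: (leq_trans _ (Hback x)). apply: (leq_trans _ (leq_imset_card (fun u => [set u; x]) _)).
      apply: subset_leq_card; apply/subsetP => g; rewrite inE => /andP[].
      rewrite in_setU1 => /orP[/eqP->|gS] xg.
      * apply/imsetP; exists v => //. by rewrite inE evx lt.
      * have [u us] := PsetP (subsetP (Hsub j') _ gS). have [Ruf Fu] := Hs1 _ us. simpl in Fu.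
        case: (front_cases Fu xg) => [xu|[_ eux ltux gdef]].
          move: (R_le Ruf) => /=. rewrite -xu => le.
          by move: (leq_ltn_trans le lt); rewrite ltnn.
        apply/imsetP; exists u => //. by rewrite inE eux ltux.
    + apply: (leq_trans _ (forallP (Hdeg j') x)). apply: subset_leq_card; apply/subsetP => g.
      rewrite !inE => /andP[/orP[/eqP Eg|gS] xg]; first by rewrite Eg xf in xg.
      by rewrite gS xg.
split.
  move=> j'' Hl2. rewrite Hl in Hl2; case: Hl2 => <-.
  split; first by rewrite Hstep eqxx.
  split.
    rewrite inE. apply: (leq_trans _ Aj'). apply: subset_leq_card. apply: setIS.
    apply/subsetP => g; rewrite inE => /andP[]//.
  set A := fun j => S j :&: (Einc e v :\: Prev e arr f v).
  apply: (leq_trans _ (Hback v)). apply: (leq_trans _ (leq_imset_card (fun u => [set u; v]) _)).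
  apply: (@leq_trans (\sum_(j in [set j in Jset e arr d S f v | j < j']) #|A j|)).
    rewrite -sum1_card. apply: leq_sum => j. rewrite !inE => /andP[Jj ltj].
    have nA : ~~ admissible e d S v j.
      apply/negP => Aj. have := Hminj' j Aj. by rewrite leqNgt ltj.
    have : #|S j :&: Einc e v| <= #|S j :&: Prev e arr f v| + #|A j|.
      apply: (leq_trans _ (leq_card_setU _ _)). apply: subset_leq_card. apply/subsetP => g.
      move=> /setIP[gS gE]. case gPr: (g \in Prev e arr f v).
        apply/setUP; left; exact/setIP.
      apply/setUP; right; apply/setIP; split => //; apply/setDP; split => //.
      by rewrite gPr.
    rewrite /admissible -ltnNge in nA. lia.
  apply: sum_disj.
    move=> i j g ij /setIP[gi _] /setIP[gj _].
    by rewrite (disjointFr (Hdis i j ij) gi) in gj.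
  move=> i _; apply/subsetP => g /setIP[gS /setDP[gE gnP]].
  have [u us] := PsetP (subsetP (Hsub i) _ gS). have [Ruf Fu] := Hs1 _ us. simpl in Fu.
  have vg : v \in g by move: gE; rewrite inE => /andP[].
  move: gnP; rewrite inE gE /= -leqNgt => ge.
  case: (front_cases Fu vg) => [vu|[_ euv ltuv ->]]; last first.
    apply/imsetP; exists u => //. by rewrite inE euv ltuv.
  rewrite /R /= vu eqxx /= in Ruf. case/andP: Ruf => le gf.
  have Ea : arr g = arr f by apply/eqP; rewrite eqn_leq le ge.
  have gEs : g \in Eset e by rewrite inE PE // (subsetP (Hsub i) _ gS).
  have fEs : f \in Eset e by rewrite inE (front_edge Fv).
  by rewrite (arrI gEs fEs Ea) eqxx in gf.
have old : forall i k g, i != k -> g \in S i -> g \in S k -> False.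
  move=> i k g ik gi gk. by rewrite (disjointFr (Hdis i k ik) gi) in gk.
have fnot : forall k, f \in S k -> False.
  by move=> k fk; move: fP; rewrite (subsetP (Hsub k) _ fk).
split.
- move=> k; rewrite Hstep Pset_rcons /=. case: (k == j'); first exact: setUS.
  apply: subset_trans (Hsub k) (subsetUr _ _).
- move=> g; rewrite Pset_rcons in_setU1 => /orP[/eqP->|gP].
    by exists j'; rewrite Hstep eqxx setU11.
  have [j gj] := Hcov g gP. exists j; rewrite Hstep; case: ifP => _ //.
  by rewrite setU1r.
- move=> i k ik; rewrite !Hstep; apply: disj_intro => g.
  case: ifP => [/eqP ij'|_]; case: ifP => [/eqP kj'|_].
  + by rewrite ij' kj' eqxx in ik.
  + rewrite in_setU1 => /orP[/eqP->|gi] gk; [exact: fnot gk | exact: old ik gi gk].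
  + move=> gi; rewrite in_setU1 => /orP[/eqP Eg|gk]; first by apply: (fnot i); rewrite -Eg.
    exact: old ik gi gk.
  + exact: old ik.
- move=> k; rewrite Hstep; case: ifP => [/eqP->|_]; [exact: Deg | exact: Hdeg k].
Qed.

Lemma inv_run s1 s2 : proc = s1 ++ s2 -> Inv (run e d a s1) s1.
Proof.
elim/last_ind: s1 s2 => [|s x IH] s2 Hp.
- split.
  + by move=> j; rewrite /run /= ffunE sub0set.
  + by move=> g; rewrite inE.
  + move=> i j _; rewrite /run /= !ffunE; apply: disj_intro => g; by rewrite inE.
  + move=> j; apply/forallP => x; rewrite /run /= ffunE.
    rewrite (_ : [set g in (set0 : {set {set T}}) | x \in g] = set0) ?cards0 //.
    by apply/setP => g; rewrite !inE.
- rewrite cat_rcons in Hp. have I := IH _ Hp.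
  rewrite /run foldl_rcons -/(run e d a s). case: x Hp => v f Hp.
  by have [_ [_ H]] := key Hp I.
Qed.

Lemma Eset_proc g : g \in Eset e -> g \in Pset proc.
Proof.
rewrite inE => /existsP[x /existsP[y /andP[exy /eqP gdef]]].
have nxy : x != y by apply: contraTneq exy => ->; rewrite eirr.
have Hfe : forall x y, e x y -> pos x < pos y -> g = [set x; y] -> g \in Pset proc.
  move=> x' y' e' lt' gd. rewrite inE. apply/mapP. exists (x', g) => //.
  apply/flatten_mapP. exists x'; first by rewrite /vorder mem_sort mem_enum.
  apply/mapP; exists g => //. rewrite /front mem_sort mem_enum inE.
  apply/existsP; exists y'. by rewrite e' lt' gd eqxx.
have : pos x != pos y by apply: contra nxy => /eqP/posI-> //.
rewrite neq_ltn => /orP[lt|lt]; first exact: Hfe exy lt gdef.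
apply: (Hfe y x) => //; first by rewrite esym. by rewrite gdef setUC.
Qed.

Lemma main_sec :
  (forall (s1 s2 : seq (T * {set T})) (v : T) (f : {set T}),
     proc = s1 ++ (v, f) :: s2 ->
     let S := run e d a s1 in
     (exists j : 'I_a, admissible e d S v j) /\
     (forall j' : 'I_a, least_idx e d S v = Some j' ->
        maxdeg_le (step e d S (v, f) j') (2 * d) /\
        j' \in Jset e arr d S f v /\
        #|[set j in Jset e arr d S f v | j < j']| <= d)) /\
  (let F := run e d a proc in
   \bigcup_(j : 'I_a) F j = Eset e /\
   (forall i j : 'I_a, i != j -> [disjoint F i & F j]) /\
   (forall j : 'I_a, maxdeg_le (F j) (2 * d))).
Proof using All.
split.
- move=> s1 s2 v f Hp S.
  have I := inv_run Hp.
  by have [Hex [Hj _]] := key Hp I.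
- move=> F. have I : Inv F proc by apply: (@inv_run proc [::]); rewrite cats0.
  case: I => Hsub Hcov Hdis Hdeg. split; [|split=> //].
  apply/setP => g. apply/bigcupP/idP.
  + case=> j _ gj. have gP := subsetP (Hsub j) _ gj. have [u us] := PsetP gP.
    rewrite inE. exact: front_edge (mem_proc us).
  + move=> gE. have [j gj] := Hcov g (Eset_proc gE). by exists j.
Qed.

End Main.

Theorem lemma1 (T : finType) (e : rel T) (pos : T -> nat) (arr : {set T} -> nat)
    (d a : nat) :
  1 <= d -> 1 <= a ->
  symmetric e -> irreflexive e ->
  (* maximum degree Delta = 2da *)
  \max_(v : T) #|[set u | e v u]| = 2 * d * a ->
  (* the ordering v_1..v_n *)
  injective pos ->
  (* each vertex has at most d earlier neighbours *)
  (forall v : T, #|[set u | e u v & pos u < pos v]| <= d) ->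
  (* distinct arrival times *)
  {in Eset e &, injective arr} ->
  (* at every step of the process *)
  (forall (s1 s2 : seq (T * {set T})) (v : T) (f : {set T}),
     proc e pos arr = s1 ++ (v, f) :: s2 ->
     let S := run e d a s1 in
     (* (i) an index j' exists *)
     (exists j : 'I_a, admissible e d S v j) /\
     (forall j' : 'I_a, least_idx e d S v = Some j' ->
        (* (i) adding f to E_j' keeps max degree of (V, E_j') <= 2d *)
        maxdeg_le (step e d S (v, f) j') (2 * d) /\
        (* (ii) j' in J(f), and at most d elements of J(f) are below j' *)
        j' \in Jset e arr d S f v /\
        #|[set j in Jset e arr d S f v | j < j']| <= d)) /\
  (* at the end, E_1..E_a partition E, each of max degree <= 2d *)
  (let F := run e d a (proc e pos arr) in
   \bigcup_(j : 'I_a) F j = Eset e /\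
   (forall i j : 'I_a, i != j -> [disjoint F i & F j]) /\
   (forall j : 'I_a, maxdeg_le (F j) (2 * d))).
Proof.
move=> d1 a1 esym eirr Hmax posI Hback arrI.
exact: (main_sec d1 a1 esym eirr Hmax posI Hback arrI).
Qed.
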